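(* In the whitened Gaussian spiked model (context), condition on the event $\mathcal{E}$. Let $(i_0,j_0)=\arg\max_{i,j}|(\widehat{\boldsymbol{\Sigma}}_{xy})_{ij}|$. There is a constant $C>0$ such that for any $\gamma\in(0,1)$, if $$m\ge\frac{C(1+\rho)^2}{\rho^2(1-\sqrt{\gamma})^2}\,s_{\mathbf{u}}(1)s_{\mathbf{v}}(1)\log n,$$ then $|u_{i_0}|\,|v_{j_0}|\ge\sqrt{\gamma/(s_{\mathbf{u}}(1)s_{\mathbf{v}}(1))}$.
   Context: Model: $m$ i.i.d. samples $(\mathbf{x}_i,\mathbf{y}_i)$ from a zero-mean jointly Gaussian law on $\mathbb{R}^n\times\mathbb{R}^n$ with $\boldsymbol{\Sigma}_{xx}=\boldsymbol{\Sigma}_{yy}=\mathbf{I}_n$, $\boldsymbol{\Sigma}_{xy}=\rho\mathbf{u}\mathbf{v}^\top$, $\rho\in(0,1)$, $\|\mathbf{u}\|_2=\|\mathbf{v}\|_2=1$, $\|\mathbf{u}\|_0\le k_{\mathbf{u}}$, $\|\mathbf{v}\|_0\le k_{\mathbf{v}}$. $\widehat{\boldsymbol{\Sigma}}_{xy}=\frac1m\sum_i\mathbf{x}_i\mathbf{y}_i^\top$, $\mathbf{W}=\widehat{\boldsymbol{\Sigma}}_{xy}-\rho\mathbf{u}\mathbf{v}^\top$. Event $\mathcal{E}$: for all $S_1,S_2\subset[n]$ with $|S_1|\le k_{\mathbf{u}}$, $|S_2|\le k_{\mathbf{v}}$, $\|\mathbf{W}_{S_1,S_2}\|_2\le C'\sqrt{((|S_1|+|S_2|)\log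 n+c'\log n)/m}$ for fixed constants $C',c'>0$ (submatrix, spectral norm). Structure functions: $s_{\mathbf{u}}(p)=(\sum_{i=1}^pu_{(i)}^2)^{-1}$, $s_{\mathbf{v}}(q)=(\sum_{j=1}^qv_{(j)}^2)^{-1}$, where $u_{(i)}$ is the $i$-th largest entry of $\mathbf{u}$ in absolute value; thus $s_{\mathbf{u}}(1)=1/u_{(1)}^2$. *)

(* Defs.v *)
From HB Require Import structures.
From mathcomp Require Import all_boot all_order all_algebra.
From mathcomp Require Import reals exp.
Set Implicit Arguments. Unset Strict Implicit. Unset Printing Implicit Defensive.
Import Order.TTheory GRing.Theory Num.Theory.
Local Open Scope ring_scope.

Definition vnorm (R : realType) (n : nat) (x : 'cV[R]_n) : R :=
  Num.sqrt (\sum_(i < n) x i 0 ^+ 2).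

(* Support of a vector (indices of nonzero entries); ||x||_0 = #|vsupp x| *)
Definition vsupp (R : realType) (n : nat) (x : 'cV[R]_n) : {set 'I_n} :=
  [set i | x i 0 != 0].

Definition submx (R : realType) (n : nat) (S1 S2 : {set 'I_n}) (W : 'M[R]_n)
  : 'M[R]_(#|S1|, #|S2|) :=
  mxsub (fun i : 'I_#|S1| => enum_val i) (fun j : 'I_#|S2| => enum_val j) W.

Definition specnorm_le (R : realType) (p q : nat) (A : 'M[R]_(p, q)) (t : R) : Prop :=
  forall z : 'cV[R]_q, vnorm (A *m z) <= t * vnorm z.

Definition Sigmahat (R : realType) (n m : nat) (x y : 'I_m -> 'cV[R]_n) : 'M[R]_n :=
  (m%:R)^-1 *: \sum_(i < m) (x i *m (y i)^T).

Definition eventE (R : realType) (n m ku kv : nat) (C' c' : R) (W : 'M[R]_n) : Prop :=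
  forall S1 S2 : {set 'I_n}, (#|S1| <= ku)%N -> (#|S2| <= kv)%N ->
    specnorm_le (submx S1 S2 W)
      (C' * Num.sqrt (((#|S1| + #|S2|)%:R * ln n%:R + c' * ln n%:R) / m%:R)).

Definition umax (R : realType) (n : nat) (u : 'cV[R]_n) : R :=
  \big[Num.max/0]_(i < n) `|u i 0|.

Definition s1 (R : realType) (n : nat) (u : 'cV[R]_n) : R := (umax u ^+ 2)^-1.

(* Main.v *)
Require Import Defs.
From HB Require Import structures.
From mathcomp Require Import all_boot all_order all_algebra.
From mathcomp Require Import reals exp.
Import Order.TTheory GRing.Theory Num.Theory.
Local Open Scope ring_scope.

From mathcomp Require Import ring lra.
Lemma entry_bound (R : realType) n m ku kv (C' c' : R) (W : 'M[R]_n) i j :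
 (1 <= ku)%N -> (1 <= kv)%N -> eventE m ku kv C' c' W ->
 `|W i j| <= C' * Num.sqrt ((2%:R * ln n%:R + c' * ln n%:R) / m%:R).
Proof.
move=> hu hv E.
have hS1 : (#|[set i]| <= ku)%N by rewrite cards1.
have hS2 : (#|[set j]| <= kv)%N by rewrite cards1.
have := E _ _ hS1 hS2 (\col_k 1).
rewrite /vnorm.
have hsum : forall p q (A : 'M[R]_(p,q)) w, (forall k l, A k l = w) ->
   \sum_(k < p) (A *m \col_l 1) k 0 ^+ 2 = p%:R * (q%:R * w) ^+ 2.
  move=> p q A w hA.
  have e1 : forall k, (A *m \col_l 1) k 0 = q%:R * w.
    move=> k; rewrite mxE (eq_bigr (fun _ => w)); last by move=> l _; rewrite !mxE hA mulr1.
    by rewrite sumr_const cardT size_enum_ord mulr_natl.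
  rewrite (eq_bigr (fun _ => (q%:R * w) ^+ 2)); last by move=> k _; rewrite e1.
  by rewrite sumr_const cardT size_enum_ord; exact: (esym (mulr_natl _ _)).
rewrite (hsum _ _ _ (W i j)); last first.
  move=> k l; rewrite /submx mxE.
  by have := enum_valP k; have := enum_valP l; rewrite !inE => /eqP -> /eqP ->.
rewrite (eq_bigr (fun _ => 1)); last by move=> k _; rewrite mxE expr1n.
rewrite sumr_const card_ord !cards1 mul1r mulr1n sqrtr1 mulr1 sqrtr_sqr.
by rewrite mul1r.
Qed.

Theorem proposition2 (R : realType) (C' c' : R) :
  0 < C' -> 0 < c' ->
  exists C : R, 0 < C /\
  forall (n m ku kv : nat) (rho : R) (u v : 'cV[R]_n)
         (x y : 'I_m -> 'cV[R]_n) (i0 j0 : 'I_n) (gamma : R),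
    (0 < m)%N ->
    0 < rho -> rho < 1 ->
    vnorm u = 1 -> vnorm v = 1 ->
    (#|vsupp u| <= ku)%N -> (#|vsupp v| <= kv)%N ->
    eventE m ku kv C' c' (Sigmahat x y - rho *: (u *m v^T)) ->
    (forall i j : 'I_n, `|Sigmahat x y i j| <= `|Sigmahat x y i0 j0|) ->
    0 < gamma -> gamma < 1 ->
    C * (1 + rho) ^+ 2 / (rho ^+ 2 * (1 - Num.sqrt gamma) ^+ 2)
      * s1 u * s1 v * ln n%:R <= m%:R ->
    Num.sqrt (gamma / (s1 u * s1 v)) <= `|u i0 0| * `|v j0 0|.
Proof.
move=> hC' hc'.
exists (4 * C' ^+ 2 * (2 + c')); split.
  by rewrite !mulr_gt0 ?exprn_gt0 ?addr_gt0.
move=> n m ku kv rho u v x y i0 j0 g hm hr0 hr1 hu hv hku hkv E hmax hg0 hg1 hM.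
rewrite /s1 in hM *.
set S := Sigmahat x y in E hmax *.
set W := S - rho *: (u *m v^T) in E.
have entry : forall i j, S i j = rho * (u i 0 * v j 0) + W i j.
  move=> i j; rewrite /W !mxE big_ord1 !mxE; lra.
set a := umax u in hM *; set b := umax v in hM *.
have hua : forall i, `|u i 0| <= a by move=> i; exact: (le_bigmax _ (fun k => `|u k 0|) i).
have hvb : forall j, `|v j 0| <= b by move=> j; exact: (le_bigmax _ (fun k => `|v k 0|) j).
have ha0 : 0 <= a by exact: le_trans (normr_ge0 _) (hua i0).
have hb0 : 0 <= b by exact: le_trans (normr_ge0 _) (hvb j0).
case: (eqVneq a 0) => [->|anz].
  by rewrite expr0n /= invr0 mul0r invr0 mulr0 sqrtr0 mulr_ge0.
case: (eqVneq b 0) => [->|bnz].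
  by rewrite expr0n /= invr0 mulr0 invr0 mulr0 sqrtr0 mulr_ge0.
have [i1 hi1] : exists i1, a = `|u i1 0|.
  by exists [arg max_(i > i0) `|u i 0|]%O; apply: bigmax_eq_arg.
have [j1 hj1] : exists j1, b = `|v j1 0|.
  by exists [arg max_(j > j0) `|v j 0|]%O; apply: bigmax_eq_arg.
have hku1 : (1 <= ku)%N.
  apply: leq_trans hku; apply/card_gt0P; exists i1.
  by rewrite inE -normr_eq0 -hi1.
have hkv1 : (1 <= kv)%N.
  apply: leq_trans hkv; apply/card_gt0P; exists j1.
  by rewrite inE -normr_eq0 -hj1.
set L := ln (n%:R : R) in hM *.
have hL : 0 <= L.
  by apply: ln_ge0; rewrite ler1n (leq_ltn_trans _ (ltn_ord i0)).
set eps := C' * Num.sqrt ((2%:R * L + c' * L) / m%:R).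
have hW : forall i j, `|W i j| <= eps.
  move=> i j; have := @entry_bound _ _ _ _ _ _ _ _ i j hku1 hkv1 E; by rewrite -/L.
have heps0 : 0 <= eps by rewrite mulr_ge0 ?sqrtr_ge0 ?ltW.
set sg := Num.sqrt g.
have hsg0 : 0 <= sg by exact: sqrtr_ge0.
have hsg1 : sg < 1 by rewrite /sg -sqrtr1 ltr_sqrt.
have ha : 0 < a by rewrite lt_def anz.
have hb : 0 < b by rewrite lt_def bnz.
set p := `|u i0 0| * `|v j0 0|.
have hmR : 0 < (m%:R : R) by rewrite ltr0n.
have h1 : rho * (a * b) - eps <= `|S i1 j1|.
  have := ler_normD (S i1 j1) (- W i1 j1).
  rewrite normrN entry addrK normrM normrM -hi1 -hj1 gtr0_norm //.
  have := hW i1 j1; lra.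
have h2 : `|S i0 j0| <= rho * p + eps.
  rewrite entry; apply: le_trans (ler_normD _ _) _.
  rewrite normrM normrM gtr0_norm // -/p; have := hW i0 j0; lra.
have h3 := hmax i1 j1.
set D := rho ^+ 2 * (1 - sg) ^+ 2 * (a ^+ 2 * b ^+ 2).
have hD : 0 < D.
  by rewrite /D !mulr_gt0 ?exprn_gt0 // subr_gt0.
set K := C' ^+ 2 * (2 + c').
have hK : 0 <= K by rewrite /K mulr_ge0 ?sqr_ge0 // addr_ge0 // ltW.
have hM' : 4 * K * (1 + rho) ^+ 2 * L <= m%:R * D.
  rewrite -ler_pdivrMr //.
  have <- : 4 * C' ^+ 2 * (2 + c') * (1 + rho) ^+ 2 / (rho ^+ 2 * (1 - sg) ^+ 2)
      * (a ^+ 2)^-1 * (b ^+ 2)^-1 * L = 4 * K * (1 + rho) ^+ 2 * L / D.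
    rewrite /K /D; field.
    by rewrite bnz anz (gt_eqF hr0) andbT subr_eq0 eq_sym (lt_eqF hsg1).
  exact: hM.
have hM'' : 4 * (K * L) <= m%:R * D.
  apply: le_trans hM'.
  have h1r : 1 <= (1 + rho) ^+ 2.
    rewrite -{1}(expr1n _ 2) ler_sqr ?nnegrE //; try lra.
  have hKL : 0 <= K * L by rewrite mulr_ge0.
  nra.
have heps2 : eps ^+ 2 = K * L / m%:R.
  rewrite /eps exprMn sqr_sqrtr; last first.
    by rewrite divr_ge0 ?ler0n // addr_ge0 ?mulr_ge0 ?ler0n // ltW.
  rewrite /K; field; by rewrite gt_eqF.
have key : 2 * eps <= rho * (a * b) * (1 - sg).
  have h1s : 0 <= 1 - sg by lra.
  have ht : 0 <= rho * (a * b) * (1 - sg) by rewrite !mulr_ge0 // ltW.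
  have h2e : 0 <= 2 * eps by rewrite mulr_ge0.
  rewrite -ler_sqr ?nnegrE //.
  have -> : (rho * (a * b) * (1 - sg)) ^+ 2 = D by rewrite /D; ring.
  rewrite exprMn heps2.
  have : K * L / m%:R <= D / 4.
    rewrite ler_pdivrMr //.
    have -> : D / 4 * m%:R = (m%:R * D) / 4 by ring.
    lra.
  lra.
have -> : g / ((a ^+ 2)^-1 * (b ^+ 2)^-1) = g * (a * b) ^+ 2.
  by rewrite -invfM invrK exprMn.
rewrite sqrtrM ?(ltW hg0) // sqrtr_sqr gtr0_norm ?mulr_gt0 // -/sg.

rewrite -(ler_pM2l hr0).
have : rho * (a * b) - 2 * eps <= rho * p by lra.
have : rho * (sg * (a * b)) = rho * (a * b) - rho * (a * b) * (1 - sg) by ring.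
lra.
Qed.
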